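(* Consider a linear many-worlds theory in which every permutation of worlds is an allowed transformation, i.e. every operator $T$ with $T_{ij}=\delta_{i,\pi(j)}$ for a bijection $\pi$ of $\{0,1,2,\dots\}$ is allowed. Let $p$ be a probability rule for this theory satisfying Axioms (A1)–(A3). Let $v=\sum_{n=0}^{N-1}v_n\lvert n\rangle$ be an allowed bounded state, so that $v_n=0$ for all $n\ge N$. If $v_n=v_m$ for some $n,m$, then $p_n(v)=p_m(v)$.
   Context: A linear many-worlds theory consists of the following data. The worlds are the vectors $\lvert n\rangle$, $n\in\{0,1,2,\dots\}$, of a countably infinite orthonormal basis of a real or complex vector space. A state is a vector $v=\sum_n v_n\lvert n\rangle$, and $v_n=\langle n\vert v\rangle$ is the amplitude of world $n$. A transformation is a linear operator $T$ with matrix elements $T_{ij}=\langle i\rvert T\lvert j\rangle$, acting by $v\mapsto v'=Tv$. A theory specifies a set of allowed states and a set of allowed transformations, and every allowed transformation maps allowed states to allowed states. A state is bounded if only finitely many of its amplitudes are nonzero. A probability rule assigns to each allowed state $v$ a sequence $(p_n(v))_{n\ge 0}$ of nonnegative reals with $\sum_n p_n(v)=1$. For a transformation $T$ and state $v$ we write $p'_n=p_n(Tv)$. The axioms are: (A1) Present state dependence: $p_n$ depends only on the present state $v$, so $p$ is a function of the state alone. (A2) Weak connection with amplitudes: for every allowed state $v$, $v_n=0$ implies $p_n(v)=0$. (A3) Weak connection with transformations: for every allowed state $v$ and allowed transformation $T$, and every partition of $\{0,1,2,\dots\}$ into subsets $\mathcal S_k$ such that $T_{ij}=0$ whenever $i$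 and $j$ lie in different subsets, we have $\sum_{n\in\mathcal S_k}p_n(v)=\sum_{n\in\mathcal S_k}p_n(Tv)$ for every $k$. *)

(* Defs.v *)
From HB Require Import structures.
From mathcomp Require Import all_boot all_order all_algebra.
From mathcomp Require Import all_classical all_reals all_analysis.
Set Implicit Arguments. Unset Strict Implicit. Unset Printing Implicit Defensive.
Import Order.TTheory GRing.Theory Num.Theory.
Local Open Scope ring_scope.

(* States: amplitude sequences v : nat -> K, with v n = <n|v>.
   Transformations: operators T : (nat -> K) -> (nat -> K). *)
Definition state (K : numFieldType) := nat -> K.
Definition operator (K : numFieldType) := state K -> state K.

Definition ket (K : numFieldType) (j : nat) : state K :=
  fun i => if i == j then 1 else 0.

Definition mat_el (K : numFieldType) (T : operator K) (i j : nat) : K :=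
  T (ket K j) i.

Definition is_linear_op (K : numFieldType) (T : operator K) : Prop :=
  forall (a : K) (u w : state K),
    T (fun i => a * u i + w i) = (fun i => a * T u i + T w i).

(* T is the permutation operator of pi : T |j> = |pi j>, i.e.
   (T v)_(pi j) = v_j, so that T_ij = delta_(i, pi j). *)
Definition is_perm_op (K : numFieldType) (pi : nat -> nat) (T : operator K) : Prop :=
  forall (v : state K) (j : nat), T v (pi j) = v j.

Definition lin_mw_theory (K : numFieldType)
  (Allowed : state K -> Prop) (Trans : operator K -> Prop) : Prop :=
  (forall T, Trans T -> is_linear_op T) /\
  (forall T v, Trans T -> Allowed v -> Allowed (T v)).

Definition all_perms_allowed (K : numFieldType) (Trans : operator K -> Prop) : Prop :=
  forall (pi : nat -> nat) (T : operator K), bijective pi -> is_perm_op pi T -> Trans T.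

(* probability rule: p v n >= 0, sum_n p v n = 1 (for allowed v).
   (A1) is built in: p is a function of the present state alone. *)
Definition prob_rule (K : numFieldType) (R : realType)
  (Allowed : state K -> Prop) (p : state K -> nat -> R) : Prop :=
  forall v, Allowed v ->
    (forall n, 0 <= p v n) /\ (\sum_(0 <= n <oo) (p v n)%:E = 1%E)%E.

Definition axiom_A2 (K : numFieldType) (R : realType)
  (Allowed : state K -> Prop) (p : state K -> nat -> R) : Prop :=
  forall v n, Allowed v -> v n = 0 -> p v n = 0.

(* (A3): a partition of nat into subsets S_k is given by a labelling
   lab : nat -> nat, with S_k = [set n | lab n = k]. *)
Definition axiom_A3 (K : numFieldType) (R : realType)
  (Allowed : state K -> Prop) (Trans : operator K -> Prop)
  (p : state K -> nat -> R) : Prop :=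
  forall v T (lab : nat -> nat), Allowed v -> Trans T ->
    (forall i j, lab i <> lab j -> mat_el T i j = 0) ->
    forall k, (\sum_(n <oo | lab n == k) (p v n)%:E =
               \sum_(n <oo | lab n == k) (p (T v) n)%:E)%E.

Definition bounded_state (K : numFieldType) (v : state K) : Prop :=
  exists N, forall n, (N <= n)%N -> v n = 0.

(* Main.v *)
Require Import Defs.
From HB Require Import structures.
From mathcomp Require Import all_boot all_order all_algebra.
From mathcomp Require Import all_classical all_reals all_analysis.
Import Order.TTheory GRing.Theory Num.Theory.
Local Open Scope ring_scope.

Lemma sum2 (R : realType) (f : nat -> R) (a b : nat) (P : pred nat) :
  a != b -> (forall i, P i = (i == a) || (i == b)) ->
  (\sum_(i <oo | P i) (f i)%:E = (f a + f b)%:E)%E.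
Proof.
move=> ab HP; apply/cvg_lim => //; apply: cvg_near_cst; near=> k.
have ka : (a < k)%N by near: k; exists a.+1.
have kb : (b < k)%N by near: k; exists b.+1.
rewrite (eq_bigl (fun i => (i == a) || (i == b))); last by move=> i; rewrite HP.
rewrite sumEFin; congr (_%:E).
rewrite big_mkcond (bigD1_seq a) /= ?mem_iota ?iota_uniq //= ?eqxx //.
rewrite big_mkcond (bigD1_seq b) /= ?mem_iota ?iota_uniq //= ?eqxx ?orbT //.
rewrite big1 ?addr0 /=; last first.
  move=> i ib; case: eqVneq => // ia; by rewrite (negbTE ib).
- by rewrite eq_sym ab.
- by rewrite add0n subn0.
- by rewrite add0n subn0.
Unshelve. all: by end_near.
Qed.

Lemma stepA (K : numFieldType) (R : realType)
  (Allowed : state K -> Prop) (Trans : operator K -> Prop)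
  (p : state K -> nat -> R)
  (Hth : lin_mw_theory Allowed Trans)
  (Hperm : all_perms_allowed Trans)
  (HA2 : axiom_A2 Allowed p)
  (HA3 : axiom_A3 Allowed Trans p)
  (v : state K) (Hv : Allowed v) (pi lab : nat -> nat) (a b : nat) :
  involutive pi -> (forall i, lab (pi i) = lab i) -> a != b ->
  (forall i, (lab i == a) = (i == a) || (i == b)) -> pi a = b -> v b = 0 ->
  p v a = p (fun i => v (pi i)) b.
Proof.
move=> Hinv Hlab ab Hset piab vb.
pose T : operator K := fun x i => x (pi i).
have HT : Trans T.
  apply: (Hperm pi); first exact: inv_bij.
  by move=> x j; rewrite /T Hinv.
have Hw : Allowed (T v) := Hth.2 _ _ HT Hv.
have H : forall i j, lab i <> lab j -> mat_el T i j = 0.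
  by move=> i j; rewrite /mat_el /T /ket; case: eqP => // <-; rewrite Hlab.
have := HA3 v T lab Hv HT H a.
rewrite (@sum2 R (p v) a b _ ab Hset) (@sum2 R (p (T v)) a b _ ab Hset).
case=> E; move: E.
rewrite (HA2 v b Hv vb) (HA2 (T v) a Hw); last by rewrite /T piab.
by rewrite addr0 add0r.
Qed.

Definition dsw (a b c d i : nat) : nat :=
  if i == a then b else if i == b then a else if i == c then d
  else if i == d then c else i.
Definition labf (a b c d i : nat) : nat :=
  if i == b then a else if i == d then c else i.

Ltac bsimp := repeat match goal with |- context[?x == ?y] =>
  (have ->: (x == y) = true by apply/eqP; congruence) ||
  (have ->: (x == y) = false by apply/eqP; congruence) end.
Ltac fin := bsimp; rewrite /= ?orbT ?orbF; congruence.
Lemma dec_eq (i a : nat) : i = a \/ i <> a.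
Proof. by case: (i =P a); [left|right]. Qed.
Ltac brute i a b c d :=
  case: (dec_eq i a) => [->|?]; [fin|];
  case: (dec_eq i b) => [->|?]; [fin|];
  case: (dec_eq i c) => [->|?]; [fin|];
  case: (dec_eq i d) => [->|?]; fin.

Lemma dsw_inv a b c d : a <> b -> a <> c -> a <> d -> b <> c -> b <> d -> c <> d ->
  involutive (dsw a b c d).
Proof. move=> *; move=> i; rewrite /dsw; brute i a b c d. Qed.

Lemma labf_dsw a b c d : a <> b -> a <> c -> a <> d -> b <> c -> b <> d -> c <> d ->
  forall i, labf a b c d (dsw a b c d i) = labf a b c d i.
Proof. move=> ? ? ? ? ? ? i; rewrite /labf /dsw. brute i a b c d. Qed.

Lemma labf_a a b c d : a <> b -> a <> c -> a <> d -> b <> c -> b <> d -> c <> d ->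
  forall i, (labf a b c d i == a) = (i == a) || (i == b).
Proof. move=> ? ? ? ? ? ? i; rewrite /labf; brute i a b c d. Qed.

Lemma labf_c a b c d : a <> b -> a <> c -> a <> d -> b <> c -> b <> d -> c <> d ->
  forall i, (labf a b c d i == c) = (i == c) || (i == d).
Proof. move=> ? ? ? ? ? ? i; rewrite /labf; brute i a b c d. Qed.

From mathcomp Require Import zify.

Theorem lemma1 (K : numFieldType) (R : realType)
  (Allowed : state K -> Prop) (Trans : operator K -> Prop)
  (p : state K -> nat -> R)
  (Hth : lin_mw_theory Allowed Trans)
  (Hperm : all_perms_allowed Trans)
  (Hp : prob_rule Allowed p)
  (HA2 : axiom_A2 Allowed p)
  (HA3 : axiom_A3 Allowed Trans p)
  (N : nat) (v : state K) (Hv : Allowed v)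
  (HvN : forall n, (N <= n)%N -> v n = 0)
  (n m : nat) (Hnm : v n = v m) :
  p v n = p v m.
Proof.
case: (dec_eq n m) => [->//|nm].
set K1 := (N + n + m).+1. set K2 := K1.+1.
have h1 : n <> K1 by rewrite /K1; lia.
have h2 : n <> K2 by rewrite /K2 /K1; lia.
have h3 : m <> K1 by rewrite /K1; lia.
have h4 : m <> K2 by rewrite /K2 /K1; lia.
have h5 : K1 <> K2 by rewrite /K2; lia.
have v1 : v K1 = 0 by apply: HvN; rewrite /K1; lia.
have v2 : v K2 = 0 by apply: HvN; rewrite /K2 /K1; lia.
have q2 : dsw n K1 m K2 m = K2 by rewrite /dsw; bsimp.
have q3 : dsw n K2 m K1 n = K2 by rewrite /dsw; bsimp.
have E2 := @stepA K R Allowed Trans p Hth Hperm HA2 HA3 v Hv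
  (dsw n K1 m K2) (labf n K1 m K2) m K2
  (@dsw_inv n K1 m K2 h1 nm h2 (nesym h3) h5 h4) (@labf_dsw n K1 m K2 h1 nm h2 (nesym h3) h5 h4)
  (introN eqP h4) (@labf_c n K1 m K2 h1 nm h2 (nesym h3) h5 h4) q2 v2.
have E3 := @stepA K R Allowed Trans p Hth Hperm HA2 HA3 v Hv
  (dsw n K2 m K1) (labf n K2 m K1) n K2
  (@dsw_inv n K2 m K1 h2 nm h1 (nesym h4) (nesym h5) h3) (@labf_dsw n K2 m K1 h2 nm h1 (nesym h4) (nesym h5) h3)
  (introN eqP h2) (@labf_a n K2 m K1 h2 nm h1 (nesym h4) (nesym h5) h3) q3 v2.
rewrite E3 E2.
congr (p _ K2); apply/funext => i; rewrite /dsw.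
case: (dec_eq i n) => [->|?]; first by bsimp; rewrite v1 v2.
case: (dec_eq i K2) => [->|?]; first by bsimp.
case: (dec_eq i m) => [->|?]; first by bsimp; rewrite v1 v2.
case: (dec_eq i K1) => [->|?]; first by bsimp.
by bsimp.
Qed.
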